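(* With notation as in the context (type $E_7$), let $x_1,x_2\in\Gamma_7^+$ with $x_1\neq x_2$. If $(x_1|x_2)=0$, then there exists a unique $x_3\in\Gamma_7^+\setminus\{x_1,x_2\}$ such that $(x_1|x_3)=(x_2|x_3)=0$; moreover this $x_3$ satisfies $x_1\oplus x_2\oplus x_3=000$. Conversely, if $x_1\oplus x_2\in\Gamma_7^+$, then $(x_1|x_2)=0$.
   Context: Let $F=\{0,1,2,3\}$ be the group $\mathbb{Z}/2\times\mathbb{Z}/2$ with operation $\oplus$ (binary addition without carry) and symplectic form $(a|a')=0$ if $a=0$, $a'=0$ or $a=a'$, and $1$ otherwise. Let $V=F^3$ (elements written $abc$), with coordinatewise $\oplus$ and form $(abc|a'b'c')=(a|a')+(b|b')+(c|c')\in\mathbb{Z}/2$. Let $\Delta$ be the $E_7$ root system with simple roots $\alpha_1,\dots,\alpha_7$, $\langle\alpha_i,\alpha_i\rangle=2$, $\langle\alpha_i,\alpha_j\rangle=-1$ for $\{i,j\}\in\{\{1,3\},\{3,4\},\{4,5\},\{5,6\},\{6,7\},\{2,4\}\}$, $0$ otherwise; $\Lambda=\bigoplus\mathbb{Z}\alpha_i$, $\Delta^+$ the positive roots. Let $f:\Lambda\to V$ be the homomorphism with $f(\alpha_1)=100$, $f(\alpha_2)=030$, $f(\alpha_3)=300$, $f(\alpha_4)=111$, $f(\alpha_5)=003$, $f(\alpha_6)=001$, $f(\alpha_7)=033$. Let $\Delta_7^+$ be the positive roots with nonzero $\alpha_7$-coefficient and $\Gamma_7^+=f(\Delta_7^+)$.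 *)

(* Defs.v *)
From mathcomp Require Import all_boot all_order all_algebra.
Set Implicit Arguments. Unset Strict Implicit. Unset Printing Implicit Defensive.
Import GRing.Theory Num.Theory.
Local Open Scope ring_scope.

(* F = Z/2 x Z/2, element k in {0,1,2,3} encoded by its two binary digits:
   0 = (false,false), 1 = (false,true), 2 = (true,false), 3 = (true,true).
   The operation (+) (binary addition without carry) is bitwise xor. *)
Definition F : finType := (bool * bool)%type.
Definition F0 : F := (false, false).
Definition F1 : F := (false, true).
Definition F2 : F := (true, false).
Definition F3 : F := (true, true).
Definition Fadd (a b : F) : F := (addb a.1 b.1, addb a.2 b.2).

(* symplectic form with values in Z/2 = bool (false = 0, true = 1) *)
Definition Fform (a a' : F) : bool := ~~ [|| a == F0, a' == F0 | a == a'].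

(* V = F^3, element abc = (a, b, c) *)
Definition V : finType := (F * F * F)%type.
Definition mkV (a b c : F) : V := (a, b, c).
Definition V0 : V := mkV F0 F0 F0.
Definition Vadd (x y : V) : V :=
  mkV (Fadd x.1.1 y.1.1) (Fadd x.1.2 y.1.2) (Fadd x.2 y.2).
Definition Vform (x y : V) : bool :=
  addb (addb (Fform x.1.1 y.1.1) (Fform x.1.2 y.1.2)) (Fform x.2 y.2).

(* E7 root lattice: Lambda = Z^7 (coefficients on alpha_1..alpha_7,
   index i : 'I_7 stands for alpha_(i+1)) *)
Definition Lambda := 'I_7 -> int.

Definition adjE7 (i j : nat) : bool :=
  [|| (i, j) == (1, 3)%N, (i, j) == (3, 4)%N, (i, j) == (4, 5)%N,
      (i, j) == (5, 6)%N, (i, j) == (6, 7)%N | (i, j) == (2, 4)%N].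

(* Cartan matrix <alpha_i, alpha_j> (indices 1-based inside) *)
Definition cartanE7 (i j : 'I_7) : int :=
  if i == j then 2
  else if adjE7 i.+1 j.+1 || adjE7 j.+1 i.+1 then -1 else 0.

Definition formE7 (u v : Lambda) : int :=
  \sum_(i < 7) \sum_(j < 7) u i * v j * cartanE7 i j.

(* roots of the (simply laced, finite type) E7 root system: the lattice
   vectors of squared length 2; positive roots: nonnegative coefficients *)
Definition is_root (v : Lambda) : Prop := formE7 v v = 2.
Definition is_pos_root (v : Lambda) : Prop :=
  is_root v /\ forall i, 0 <= v i.

Definition f_simple (i : 'I_7) : V :=
  match val i with
  | 0 => mkV F1 F0 F0
  | 1 => mkV F0 F3 F0
  | 2 => mkV F3 F0 F0
  | 3 => mkV F1 F1 F1
  | 4 => mkV F0 F0 F3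
  | 5 => mkV F0 F0 F1
  | _ => mkV F0 F3 F3
  end.

(* V has exponent 2, so f(sum c_i alpha_i) = (+)_{i : c_i odd} f(alpha_i) *)
Definition fmap (v : Lambda) : V :=
  foldr Vadd V0 [seq (if odd `|v i|%N then f_simple i else V0) | i <- enum 'I_7].

Definition idx7 : 'I_7 := @Ordinal 7 6 isT.

Definition Gamma7 (x : V) : Prop :=
  exists v : Lambda, is_pos_root v /\ v idx7 != 0 /\ fmap v = x.

(* Main.v *)
Require Import Defs.
From mathcomp Require Import all_boot all_order all_algebra.
From mathcomp Require Import zify ring.
Import GRing.Theory Num.Theory.
Local Open Scope ring_scope.
Definition wv (v : Lambda) (k : nat) : int := v (inord k).
Definition cn (i j : nat) : int :=
  if i == j then 2
  else if adjE7 i.+1 j.+1 || adjE7 j.+1 i.+1 then -1 else 0.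
Lemma cartan_cn (i j : 'I_7) : cartanE7 i j = cn i j.
Proof. by []. Qed.
Definition Qp (a0 a1 a2 a3 a4 a5 a6 : int) : int :=
  2 * (a0*a0 + a1*a1 + a2*a2 + a3*a3 + a4*a4 + a5*a5 + a6*a6)
  - 2 * (a0*a2 + a2*a3 + a3*a4 + a4*a5 + a5*a6 + a1*a3).
Lemma expand (v : Lambda) : formE7 v v = Qp (wv v 0) (wv v 1) (wv v 2) (wv v 3) (wv v 4) (wv v 5) (wv v 6).
Proof.
have hv : forall o, v o = wv v o by move=> o; rewrite /wv inord_val.
rewrite /formE7 !big_ord_recl !big_ord0 !hv !cartan_cn /= /bump /= /cn /= /Qp.
ring.
Qed.
Lemma sq0 (x : int) : 0 <= x * x.
Proof. by rewrite -expr2 sqr_ge0. Qed.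
Lemma bnd0 (a0 a1 a2 a3 a4 a5 a6 : int) : Qp a0 a1 a2 a3 a4 a5 a6 = 2 -> 0 <= a0 -> a0 <= 2.
Proof.
rewrite /Qp => hQ h0.
have s0 := sq0 ((2)*a1 + (-1)*a3).
have s1 := sq0 ((-1)*a0 + (2)*a2 + (-1)*a3).
have s2 := sq0 ((-1)*a0 + (2)*a3 + (-2)*a4).
have s3 := sq0 ((-1)*a0 + (2)*a4 + (-2)*a5).
have s4 := sq0 ((-1)*a0 + (2)*a5 + (-2)*a6).
have s5 := sq0 ((-1)*a0 + (2)*a6).
have hs : a0 * a0 <= 4 by lia.
nia.
Qed.
Lemma bnd1 (a0 a1 a2 a3 a4 a5 a6 : int) : Qp a0 a1 a2 a3 a4 a5 a6 = 2 -> 0 <= a1 -> a1 <= 2.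
Proof.
rewrite /Qp => hQ h0.
have s0 := sq0 ((2)*a0 + (-1)*a2).
have s1 := sq0 ((3)*a2 + (-2)*a3).
have s2 := sq0 ((-3)*a1 + (4)*a3 + (-3)*a4).
have s3 := sq0 ((-3)*a1 + (5)*a4 + (-4)*a5).
have s4 := sq0 ((-3)*a1 + (6)*a5 + (-5)*a6).
have s5 := sq0 ((-3)*a1 + (7)*a6).
have hs : a1 * a1 <= 7 by lia.
nia.
Qed.
Lemma bnd2 (a0 a1 a2 a3 a4 a5 a6 : int) : Qp a0 a1 a2 a3 a4 a5 a6 = 2 -> 0 <= a2 -> a2 <= 3.
Proof.
rewrite /Qp => hQ h0.
have s0 := sq0 ((2)*a0 + (-1)*a2).
have s1 := sq0 ((2)*a1 + (-1)*a3).
have s2 := sq0 ((-2)*a2 + (3)*a3 + (-2)*a4).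
have s3 := sq0 ((-2)*a2 + (4)*a4 + (-3)*a5).
have s4 := sq0 ((-2)*a2 + (5)*a5 + (-4)*a6).
have s5 := sq0 ((-1)*a2 + (3)*a6).
have hs : a2 * a2 <= 12 by lia.
nia.
Qed.
Lemma bnd3 (a0 a1 a2 a3 a4 a5 a6 : int) : Qp a0 a1 a2 a3 a4 a5 a6 = 2 -> 0 <= a3 -> a3 <= 4.
Proof.
rewrite /Qp => hQ h0.
have s0 := sq0 ((2)*a0 + (-1)*a2).
have s1 := sq0 ((2)*a1 + (-1)*a3).
have s2 := sq0 ((3)*a2 + (-2)*a3).
have s3 := sq0 ((-1)*a3 + (2)*a4 + (-1)*a5).
have s4 := sq0 ((-1)*a3 + (3)*a5 + (-2)*a6).
have s5 := sq0 ((-1)*a3 + (4)*a6).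
have hs : a3 * a3 <= 24 by lia.
nia.
Qed.
Lemma bnd4 (a0 a1 a2 a3 a4 a5 a6 : int) : Qp a0 a1 a2 a3 a4 a5 a6 = 2 -> 0 <= a4 -> a4 <= 3.
Proof.
rewrite /Qp => hQ h0.
have s0 := sq0 ((2)*a0 + (-1)*a2).
have s1 := sq0 ((2)*a1 + (-1)*a3).
have s2 := sq0 ((3)*a2 + (-2)*a3).
have s3 := sq0 ((5)*a3 + (-6)*a4).
have s4 := sq0 ((-1)*a4 + (2)*a5 + (-1)*a6).
have s5 := sq0 ((-1)*a4 + (3)*a6).
have hs : a4 * a4 <= 15 by lia.
nia.
Qed.
Lemma bnd5 (a0 a1 a2 a3 a4 a5 a6 : int) : Qp a0 a1 a2 a3 a4 a5 a6 = 2 -> 0 <= a5 -> a5 <= 2.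
Proof.
rewrite /Qp => hQ h0.
have s0 := sq0 ((2)*a0 + (-1)*a2).
have s1 := sq0 ((2)*a1 + (-1)*a3).
have s2 := sq0 ((3)*a2 + (-2)*a3).
have s3 := sq0 ((5)*a3 + (-6)*a4).
have s4 := sq0 ((4)*a4 + (-5)*a5).
have s5 := sq0 ((-1)*a5 + (2)*a6).
have hs : a5 * a5 <= 8 by lia.
nia.
Qed.
Lemma bnd6 (a0 a1 a2 a3 a4 a5 a6 : int) : Qp a0 a1 a2 a3 a4 a5 a6 = 2 -> 0 <= a6 -> a6 <= 1.
Proof.
rewrite /Qp => hQ h0.
have s0 := sq0 ((2)*a0 + (-1)*a2).
have s1 := sq0 ((2)*a1 + (-1)*a3).
have s2 := sq0 ((3)*a2 + (-2)*a3).
have s3 := sq0 ((5)*a3 + (-6)*a4).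
have s4 := sq0 ((4)*a4 + (-5)*a5).
have s5 := sq0 ((3)*a5 + (-4)*a6).
have hs : a6 * a6 <= 3 by lia.
nia.
Qed.
Definition Wl : seq (V * seq nat) := [::
  (mkV F0 F1 F1, [:: 1; 1; 2; 3; 3; 2; 1]%N);
  (mkV F0 F1 F2, [:: 1; 1; 2; 3; 2; 2; 1]%N);
  (mkV F0 F1 F3, [:: 1; 1; 2; 3; 2; 1; 1]%N);
  (mkV F0 F2 F1, [:: 1; 2; 2; 3; 3; 2; 1]%N);
  (mkV F0 F2 F2, [:: 1; 2; 2; 3; 2; 2; 1]%N);
  (mkV F0 F2 F3, [:: 1; 2; 2; 3; 2; 1; 1]%N);
  (mkV F0 F3 F1, [:: 0; 0; 0; 0; 1; 1; 1]%N);
  (mkV F0 F3 F2, [:: 0; 0; 0; 0; 0; 1; 1]%N);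
  (mkV F0 F3 F3, [:: 0; 0; 0; 0; 0; 0; 1]%N);
  (mkV F1 F0 F1, [:: 1; 1; 2; 2; 1; 1; 1]%N);
  (mkV F1 F0 F2, [:: 1; 1; 2; 2; 2; 1; 1]%N);
  (mkV F1 F0 F3, [:: 1; 1; 2; 2; 2; 2; 1]%N);
  (mkV F1 F1 F0, [:: 0; 1; 0; 1; 1; 1; 1]%N);
  (mkV F1 F2 F0, [:: 0; 0; 0; 1; 1; 1; 1]%N);
  (mkV F1 F3 F0, [:: 1; 2; 2; 4; 3; 2; 1]%N);
  (mkV F2 F0 F1, [:: 1; 1; 1; 2; 1; 1; 1]%N);
  (mkV F2 F0 F2, [:: 1; 1; 1; 2; 2; 1; 1]%N);
  (mkV F2 F0 F3, [:: 1; 1; 1; 2; 2; 2; 1]%N);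
  (mkV F2 F1 F0, [:: 0; 1; 1; 1; 1; 1; 1]%N);
  (mkV F2 F2 F0, [:: 0; 0; 1; 1; 1; 1; 1]%N);
  (mkV F2 F3 F0, [:: 1; 2; 3; 4; 3; 2; 1]%N);
  (mkV F3 F0 F1, [:: 0; 1; 1; 2; 1; 1; 1]%N);
  (mkV F3 F0 F2, [:: 0; 1; 1; 2; 2; 1; 1]%N);
  (mkV F3 F0 F3, [:: 0; 1; 1; 2; 2; 2; 1]%N);
  (mkV F3 F1 F0, [:: 1; 1; 1; 1; 1; 1; 1]%N);
  (mkV F3 F2 F0, [:: 1; 0; 1; 1; 1; 1; 1]%N);
  (mkV F3 F3 F0, [:: 2; 2; 3; 4; 3; 2; 1]%N)].
Definition S : seq V := map fst Wl.

Definition fw7 (a0 a1 a2 a3 a4 a5 a6 : int) : V :=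
  foldr Vadd V0 [:: if odd `|a0|%N then f_simple (@Ordinal 7 0 isT) else V0;
                    if odd `|a1|%N then f_simple (@Ordinal 7 1 isT) else V0;
                    if odd `|a2|%N then f_simple (@Ordinal 7 2 isT) else V0;
                    if odd `|a3|%N then f_simple (@Ordinal 7 3 isT) else V0;
                    if odd `|a4|%N then f_simple (@Ordinal 7 4 isT) else V0;
                    if odd `|a5|%N then f_simple (@Ordinal 7 5 isT) else V0;
                    if odd `|a6|%N then f_simple (@Ordinal 7 6 isT) else V0].

Lemma enum7 : enum 'I_7 = [:: @Ordinal 7 0 isT; @Ordinal 7 1 isT; @Ordinal 7 2 isT;
  @Ordinal 7 3 isT; @Ordinal 7 4 isT; @Ordinal 7 5 isT; @Ordinal 7 6 isT].
Proof. by apply: (inj_map val_inj); rewrite val_enum_ord. Qed.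

Lemma io k (H : (k < 7)%N) : inord k = Ordinal H.
Proof. by apply/val_inj; rewrite /= inordK. Qed.

Lemma fmapE (v : Lambda) :
  fmap v = fw7 (wv v 0) (wv v 1) (wv v 2) (wv v 3) (wv v 4) (wv v 5) (wv v 6).
Proof.
rewrite /fmap enum7 /wv (io 0 isT) (io 1 isT) (io 2 isT) (io 3 isT).
by rewrite (io 4 isT) (io 5 isT) (io 6 isT).
Qed.

Definition chk : bool :=
  all (fun n0 => all (fun n1 => all (fun n2 => all (fun n3 =>
  all (fun n4 => all (fun n5 =>
    (Qp n0%:Z n1%:Z n2%:Z n3%:Z n4%:Z n5%:Z 1 == 2) ==>
    (fw7 n0%:Z n1%:Z n2%:Z n3%:Z n4%:Z n5%:Z 1 \in S))
  (iota 0 3)) (iota 0 4)) (iota 0 5)) (iota 0 4)) (iota 0 3)) (iota 0 3).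

Lemma chkT : chk.
Proof. by vm_compute. Qed.

Lemma gamma_S x : Gamma7 x -> x \in S.
Proof.
move=> [v [[hr hpos] [h7 <-]]].
rewrite /is_root expand in hr; rewrite fmapE.
have p k : 0 <= wv v k by apply: hpos.
have e6 : idx7 = inord 6 by apply/val_inj; rewrite /= inordK.
rewrite e6 -/(wv v 6) in h7.
have b0 := bnd0 _ _ _ _ _ _ _ hr (p 0%N). have b1 := bnd1 _ _ _ _ _ _ _ hr (p 1%N).
have b2 := bnd2 _ _ _ _ _ _ _ hr (p 2%N). have b3 := bnd3 _ _ _ _ _ _ _ hr (p 3%N).
have b4 := bnd4 _ _ _ _ _ _ _ hr (p 4%N). have b5 := bnd5 _ _ _ _ _ _ _ hr (p 5%N).
have b6 := bnd6 _ _ _ _ _ _ _ hr (p 6%N).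
move: (p 0%N) (p 1%N) (p 2%N) (p 3%N) (p 4%N) (p 5%N) (p 6%N) hr b0 b1 b2 b3 b4 b5 b6 h7.
move: (wv v 0) (wv v 1) (wv v 2) (wv v 3) (wv v 4) (wv v 5) (wv v 6).
case=> // n0; case=> // n1; case=> // n2; case=> // n3; case=> // n4; case=> // n5; case=> // n6.
move=> _ _ _ _ _ _ _ hr b0 b1 b2 b3 b4 b5 b6 h7.
have -> : n6 = 1%N by lia.
move: chkT hr; rewrite /chk.
have m0 : n0 \in iota 0 3 by rewrite mem_iota; lia.
have m1 : n1 \in iota 0 3 by rewrite mem_iota; lia.
have m2 : n2 \in iota 0 4 by rewrite mem_iota; lia.
have m3 : n3 \in iota 0 5 by rewrite mem_iota; lia.
have m4 : n4 \in iota 0 4 by rewrite mem_iota; lia.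
have m5 : n5 \in iota 0 3 by rewrite mem_iota; lia.
have -> : n6 = 1%N by lia.
move=> /allP/(_ _ m0) /allP/(_ _ m1) /allP/(_ _ m2) /allP/(_ _ m3)
       /allP/(_ _ m4) /allP/(_ _ m5) /implyP H hr.
by apply: H; apply/eqP.
Qed.

Definition wit_ok (p : V * seq nat) : bool :=
  let l := p.2 in
  [&& size l == 7,
      Qp (nth 0 l 0)%:Z (nth 0 l 1)%:Z (nth 0 l 2)%:Z (nth 0 l 3)%:Z
         (nth 0 l 4)%:Z (nth 0 l 5)%:Z (nth 0 l 6)%:Z == 2,
      (0 < nth 0 l 6)%N &
      fw7 (nth 0 l 0)%:Z (nth 0 l 1)%:Z (nth 0 l 2)%:Z (nth 0 l 3)%:Z
         (nth 0 l 4)%:Z (nth 0 l 5)%:Z (nth 0 l 6)%:Z == p.1].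

Lemma witT : all wit_ok Wl.
Proof. by vm_compute. Qed.

Lemma wit p : wit_ok p -> Gamma7 p.1.
Proof.
case: p => x l /and4P [_ hq h6 hf] /=.
pose v : Lambda := fun i => (nth 0%N l i)%:Z.
have hw k : (k < 7)%N -> wv v k = (nth 0%N l k)%:Z by move=> hk; rewrite /wv /v inordK.
exists v; split; [split|split].
- by rewrite /is_root expand !hw //; apply/eqP.
- by move=> i; rewrite /v.
- by rewrite /v /idx7 /=; rewrite eqz_nat -lt0n.
- by rewrite fmapE !hw //; apply/eqP.
Qed.

Lemma S_gamma x : x \in S -> Gamma7 x.
Proof.
case/mapP=> p hp ->; apply: wit.
by move/allP: witT; apply.
Qed.

Lemma gammaE x : Gamma7 x <-> x \in S.
Proof. by split; [apply: gamma_S | apply: S_gamma]. Qed.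

Definition P3 (x1 x2 c : V) : bool :=
  [&& c != x1, c != x2, ~~ Vform x1 c & ~~ Vform x2 c].

Definition final_chk : bool :=
  all (fun x1 => all (fun x2 => (x1 != x2) ==>
    ((~~ Vform x1 x2 ==> [&& Vadd x1 x2 \in S, P3 x1 x2 (Vadd x1 x2) &
                            all (fun c => P3 x1 x2 c ==> (c == Vadd x1 x2)) S])
     && ((Vadd x1 x2 \in S) ==> ~~ Vform x1 x2))) S) S.

Lemma finalT : final_chk.
Proof. by vm_compute. Qed.

Lemma Vaddxx (y : V) : Vadd y y = V0.
Proof. by case: y => [[[? ?] [? ?]] [? ?]]; rewrite /Vadd /Fadd /= !addbb. Qed.

Theorem mainTheorem9 :
  forall x1 x2 : V, Gamma7 x1 -> Gamma7 x2 -> x1 <> x2 ->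
    (Vform x1 x2 = false ->
       (exists! x3 : V, [/\ Gamma7 x3, x3 <> x1, x3 <> x2,
                           Vform x1 x3 = false & Vform x2 x3 = false]) /\
       (forall x3 : V, Gamma7 x3 -> x3 <> x1 -> x3 <> x2 ->
          Vform x1 x3 = false -> Vform x2 x3 = false ->
          Vadd (Vadd x1 x2) x3 = V0))
    /\ (Gamma7 (Vadd x1 x2) -> Vform x1 x2 = false).
Proof.
move=> x1 x2 /gammaE h1 /gammaE h2 hne.
move: finalT => /allP/(_ _ h1) /allP/(_ _ h2).
have hne' : x1 != x2 by apply/eqP.
move=> /implyP /(_ hne') /andP [A B]; split; last first.
  by move=> /gammaE hS; move/implyP: B => /(_ hS) /negbTE.
move=> hf; move/implyP: A; rewrite hf => /(_ isT) /and3P [hS hP hall].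
have uniq3 : forall x3, Gamma7 x3 -> x3 <> x1 -> x3 <> x2 ->
    Vform x1 x3 = false -> Vform x2 x3 = false -> x3 = Vadd x1 x2.
  move=> x3 /gammaE h3 n1 n2 f1 f2; apply/eqP.
  move: (allP hall x3 h3) => /implyP; apply.
  by rewrite /P3 f1 f2 /= andbT; apply/andP; split; apply/eqP.
split.
- exists (Vadd x1 x2); split.
    case/and4P: hP => n1 n2 f1 f2.
    by split; [apply/gammaE | apply/eqP | apply/eqP | apply/negbTE | apply/negbTE].
  by move=> y [g n1 n2 f1 f2]; rewrite (uniq3 y).
- by move=> x3 g n1 n2 f1 f2; rewrite (uniq3 x3) // Vaddxx.
Qed.
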